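(* Let $T>0$ and let $S:[0,1]\to\mathbb{R}$ be continuous and concave. Define the successor function $\lambda:\mathbb{R}\to\mathbb{R}$ by $\lambda(x)=\min_{p\in[0,1]}\big(px-T\,S(p)\big)$, and the operation $x\oplus_S y=\min_{p\in[0,1]}\big(px+(1-p)y-T\,S(p)\big)=\lambda(x-y)+y$ on $\mathbb{R}$. Then: (1) $S(p)=S(1-p)$ for all $p\in[0,1]$ if and only if $\lambda(x)-\lambda(-x)=x$ for all $x\in\mathbb{R}$; (2) $S(0)=0$ if and only if $\lambda(x)\le 0$ for all $x$ and $\lim_{x\to+\infty}\lambda(x)=0$; (3) $S(1)=0$ if and only if $\lambda(x)\le x$ for all $x$ and $\lim_{x\to-\infty}(\lambda(x)-x)=0$; (4) $S$ satisfies the associativity condition — for all $p_1,p_2\ge 0$ with $p_1+p_2\le1$, $p_1<1$, $p_1+p_2>0$: $S(p_1)+(1-p_1)S\big(\frac{p_2}{1-p_1}\big)=S(p_1+p_2)+(p_1+p_2)S\big(\frac{p_1}{p_1+p_2}\big)$ — making $\oplus_S$ associative on $\mathbb{R}$, if and only if $\lambda(x-\lambda(y))+\lambda(y)=\lambda(\lambda(x-y)+y)$ for all $x,y\in\mathbb{R}$.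
   Context: The operation $\oplus_S$ is the ''thermodynamic semiring'' addition on $\mathbb{R}$ (min-plus convention) associated with the entropy function $S$ at temperature $T$. *)

(* Defs.v *)
From HB Require Import structures.
From mathcomp Require Import all_boot all_order all_algebra.
From mathcomp Require Import all_classical all_reals all_analysis.
Set Implicit Arguments. Unset Strict Implicit. Unset Printing Implicit Defensive.
Import Order.TTheory GRing.Theory Num.Theory.
Import numFieldNormedType.Exports.
Local Open Scope classical_set_scope.
Local Open Scope ring_scope.

Definition concave_on01 {R : realType} (S : R -> R) : Prop :=
  forall x y t : R, 0 <= x <= 1 -> 0 <= y <= 1 -> 0 <= t <= 1 ->
    t * S x + (1 - t) * S y <= S (t * x + (1 - t) * y).

(* successor function lambda(x) = min_{p in [0,1]} (p x - T S(p));
   the min exists (S continuous on a compact), so it is the infimum. *)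
Definition lam {R : realType} (T : R) (S : R -> R) (x : R) : R :=
  inf [set p * x - T * S p | p in `[0, 1]%classic].

Definition oplusS {R : realType} (T : R) (S : R -> R) (x y : R) : R :=
  inf [set p * x + (1 - p) * y - T * S p | p in `[0, 1]%classic].

Definition assoc_cond {R : realType} (S : R -> R) : Prop :=
  forall p1 p2 : R, 0 <= p1 -> 0 <= p2 -> p1 + p2 <= 1 -> p1 < 1 -> 0 < p1 + p2 ->
    S p1 + (1 - p1) * S (p2 / (1 - p1)) = S (p1 + p2) + (p1 + p2) * S (p1 / (p1 + p2)).

(* Main.v *)
Require Import Defs.
From HB Require Import structures.
From mathcomp Require Import all_boot all_order all_algebra.
From mathcomp Require Import all_classical all_reals all_analysis.
From mathcomp Require Import ring lra.
Import Order.TTheory GRing.Theory Num.Theory Num.Def.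
Import numFieldNormedType.Exports.
Local Open Scope classical_set_scope.
Local Open Scope ring_scope.


Section L.
Variables (R : realType) (T : R) (S : R -> R).
Hypothesis hT : 0 < T.
Hypothesis hconc : concave_on01 S.

Lemma S_lb p : 0 <= p <= 1 -> minr (S 0) (S 1) <= S p.
Proof.
move=> /andP[p0 p1].
have h : p * S 1 + (1 - p) * S 0 <= S (p * 1 + (1 - p) * 0).
  by apply: hconc; rewrite ?lexx ?ler01 ?p0 ?p1.
move: h; rewrite mulr1 mulr0 addr0 => h; apply: le_trans h.
have m0 : minr (S 0) (S 1) <= S 0 by rewrite ge_min lexx.
have m1 : minr (S 0) (S 1) <= S 1 by rewrite ge_min lexx orbT.
have : p * minr (S 0) (S 1) <= p * S 1 by rewrite ler_wpM2l.
have : (1 - p) * minr (S 0) (S 1) <= (1 - p) * S 0 by rewrite ler_wpM2l // subr_ge0.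
lra.
Qed.

Definition Mb := 2 * S (2^-1) - minr (S 0) (S 1).

Lemma S_ub p : 0 <= p <= 1 -> S p <= Mb.
Proof.
move=> /andP[p0 p1].
have h2 : 0 <= (2:R)^-1 <= 1 by rewrite invr_ge0 ler0n /= invf_le1 // ler1n.
have hq : 0 <= 1 - p <= 1 by apply/andP; split; lra.
have := hconc p (1-p) (2^-1) (ltac:(by apply/andP)) hq h2.
have -> : 2^-1 * p + (1 - 2^-1) * (1 - p) = 2^-1 :> R.
  have : (2:R)^-1 * 2 = 1 by rewrite mulVf.
  lra.
have := @S_lb (1-p) hq.
rewrite /Mb. have : (2:R)^-1 * 2 = 1 by rewrite mulVf.
nra.
Qed.

Lemma lam_hlb x : has_lbound [set p * x - T * S p | p in `[0, 1]%classic].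
Proof.
exists (- `|x| - T * Mb) => _ [p /= hp <-].
move: hp; rewrite in_itv /= => hp.
have := @S_ub p hp.
have : - `|x| <= p * x.
  case/andP: hp => p0 p1.
  case: (lerP 0 x) => x0.
    by rewrite (ger0_norm x0); nra.
  by rewrite (ltr0_norm x0); nra.
move=> h1 h2; have : T * S p <= T * Mb by rewrite ler_pM2l.
lra.
Qed.

Lemma lam_ub x p : 0 <= p <= 1 -> lam T S x <= p * x - T * S p.
Proof.
move=> hp; apply: ge_inf; first exact: lam_hlb.
by exists p => //=; rewrite in_itv.
Qed.

Lemma lam_glb x c : (forall p, 0 <= p <= 1 -> c <= p * x - T * S p) -> c <= lam T S x.
Proof.
move=> h; apply: lb_le_inf.
  by exists (0 * x - T * S 0); exists 0 => //=; rewrite in_itv /= lexx ler01.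
by move=> y [p /=]; rewrite in_itv /= => hp <-; apply: h.
Qed.


Lemma lam_mono x x' : x <= x' -> lam T S x <= lam T S x' /\ lam T S x' <= lam T S x + (x' - x).
Proof.
move=> xx; split.
  apply: lam_glb => p hp; apply: (le_trans (lam_ub x p hp)).
  case/andP: hp => p0 p1; nra.
rewrite -lerBlDr; apply: lam_glb => p hp; have := lam_ub x' p hp.
case/andP: hp => p0 p1; nra.
Qed.

Lemma three_slope q p r : 0 <= q -> q < p -> p < r -> r <= 1 ->
  (S r - S p) / (r - p) <= (S p - S q) / (p - q).
Proof.
move=> q0 qp pr r1.
have rq : 0 < r - q by lra.
have hp : 0 < r - p by lra.
have hq : 0 < p - q by lra.
set t := (r - p) / (r - q).
have t0 : 0 <= t <= 1.
  apply/andP; split; first by apply: divr_ge0; lra.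
  rewrite /t ler_pdivrMr // mul1r; lra.
have ep : t * q + (1 - t) * r = p.
  have : t * (r - q) = r - p by rewrite /t mulfVK // gt_eqF.
  nra.
have := hconc q r t (ltac:(apply/andP; split; lra)) (ltac:(apply/andP; split; lra)) t0.
rewrite ep => h.
have h2 : (r - q) * (t * S q + (1 - t) * S r) <= (r - q) * S p by rewrite ler_pM2l.
have et : (r - q) * t = r - p by rewrite /t mulrC mulfVK // gt_eqF.
have e2 : (r - q) * (t * S q + (1 - t) * S r) = (r - p) * S q + (p - q) * S r.
  have -> : p - q = (r - q) - (r - p) by ring.
  rewrite -et; ring.
rewrite e2 in h2.
rewrite ler_pdivrMr // mulrAC ler_pdivlMr //.
nra.
Qed.

Lemma subgrad p : 0 < p < 1 -> exists m, forall q, 0 <= q <= 1 -> S q <= S p + m * (q - p).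
Proof.
case/andP=> p0 p1.
set E := [set (S p - S q) / (p - q) | q in `[0, p[%classic].
have lbE : lbound E ((S 1 - S p) / (1 - p)).
  move=> y [q /=]; rewrite in_itv /= => /andP[q0 qp] <-.
  exact: three_slope.
have hE : has_lbound E by exists ((S 1 - S p) / (1 - p)).
exists (inf E) => q /andP[q0 q1].
case: (ltgtP q p) => [qp|pq|->]; last by rewrite subrr mulr0 addr0.
- have : inf E <= (S p - S q) / (p - q).
    apply: ge_inf => //; exists q => //=; rewrite in_itv /= q0 qp //=.
  rewrite ler_pdivlMr ?subr_gt0 //; nra.
- have : (S q - S p) / (q - p) <= inf E.
    apply: lb_le_inf; first by exists ((S p - S 0) / (p - 0)), 0 => //=; rewrite in_itv /= lexx.
    move=> y [r /=]; rewrite in_itv /= => /andP[r0 rp] <-.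
    exact: three_slope.
  rewrite ler_pdivrMr ?subr_gt0 //; nra.
Qed.

Lemma lam_exact p : 0 < p < 1 -> exists x, lam T S x = p * x - T * S p.
Proof.
move=> hp; have [m hm] := subgrad p hp.
exists (T * m); apply/le_anti/andP; split.
  by apply: lam_ub; case/andP: hp => *; apply/andP; split; apply: ltW.
apply: lam_glb => q hq; have := hm q hq.
move=> h; have : T * S q <= T * (S p + m * (q - p)) by rewrite ler_pM2l.
lra.
Qed.

Lemma oplus_lam x y : oplusS T S x y = lam T S (x - y) + y.
Proof.
have key : forall p, 0 <= p <= 1 -> p * x + (1 - p) * y - T * S p = (p * (x - y) - T * S p) + y.
  by move=> p _; ring.
apply/le_anti/andP; split.
  rewrite -lerBlDr; apply: lam_glb => p hp; rewrite lerBlDr -key //.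
  apply: ge_inf; last by exists p => //=; rewrite in_itv.
  exists (lam T S (x - y) + y) => w [q /=]; rewrite in_itv /= => hq <-.
  by rewrite key // lerD2r; apply: lam_ub.
apply: lb_le_inf.
  by exists (0 * x + (1 - 0) * y - T * S 0); exists 0 => //=; rewrite in_itv /= lexx ler01.
move=> w [q /=]; rewrite in_itv /= => hq <-.
by rewrite key // lerD2r; apply: lam_ub.
Qed.


Definition cont0P := forall e, 0 < e -> exists2 d, 0 < d & forall p, 0 < p < d -> `|S 0 - S p| <= e.

Lemma tail_pinf : cont0P -> forall e, 0 < e -> exists X, forall x, X <= x ->
  - T * S 0 - e <= lam T S x <= - T * S 0.
Proof.
move=> hc e e0.
have [d d0 hd] := hc (e / T) (divr_gt0 e0 hT).
exists (maxr 0 (T * (Mb - S 0) / d)) => x; rewrite ge_max => /andP[x0 xX].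
apply/andP; split; last first.
  by have := lam_ub x 0 (ltac:(by rewrite lexx ler01)); rewrite mul0r sub0r mulNr.
apply: lam_glb => p /andP[p0 p1].
case: (ltP p d) => pd.
  have px : 0 <= p * x by apply: mulr_ge0.
  case: (eqVneq p 0) => [->|pn0]; first by rewrite mul0r sub0r mulNr; lra.
  have hp : 0 < p < d by rewrite pd lt_neqAle eq_sym pn0 p0.
  have := hd p hp; rewrite ler_norml => /andP[h1 h2].
  have : T * (S 0 - S p) >= T * (- (e / T)) by rewrite ler_pM2l.
  rewrite mulrN mulrCA divff ?gt_eqF // mulr1; lra.
have hub := @S_ub p (ltac:(by rewrite p0 p1)).
have : T * (Mb - S 0) <= d * x by rewrite [d * x]mulrC -ler_pdivrMr.
have : d * x <= p * x by apply: ler_wpM2r.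
have : T * S p <= T * Mb by rewrite ler_pM2l.
nra.
Qed.

End L.

Lemma cont0 (R : realType) (S : R -> R) : {within `[0, 1], continuous S} -> @cont0P R S.
Proof.
move=> /(continuous_within_itvP _ ltr01) [_ h0 _] e e0.
move/cvgrPdist_le/(_ e e0): h0.
rewrite near_withinE /= => /nbhs_ballP[d /= d0 H].
exists d => // p /andP[p0 pd]; apply: H => //.
by rewrite /ball /= sub0r normrN gtr0_norm.
Qed.

Lemma cont1 (R : realType) (S : R -> R) : {within `[0, 1], continuous S} ->
  @cont0P R (fun p => S (1 - p)).
Proof.
move=> /(continuous_within_itvP _ ltr01) [_ _ h1] e e0.
move/cvgrPdist_le/(_ e e0): h1.
rewrite near_withinE /= => /nbhs_ballP[d /= d0 H].
exists d => // p /andP[p0 pd]; rewrite subr0; apply: H.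
  by rewrite /ball /= opprB addrCA subrr addr0 gtr0_norm.
by rewrite ltrBlDr ltrDl.
Qed.

Lemma concave_refl (R : realType) (S : R -> R) : concave_on01 S -> concave_on01 (fun p => S (1 - p)).
Proof.
move=> hc x y t hx hy ht /=.
have -> : 1 - (t * x + (1 - t) * y) = t * (1 - x) + (1 - t) * (1 - y) by ring.
apply: hc => //; [case/andP: hx | case/andP: hy] => *; apply/andP; split; lra.
Qed.

Lemma lam_refl (R : realType) (T : R) (S : R -> R) : 0 < T -> concave_on01 S ->
  forall x, lam T S x - x = lam T (fun p => S (1 - p)) (- x).
Proof.
move=> hT hc x; have hc' := concave_refl _ _ hc.
apply/le_anti/andP; split.
  apply: lam_glb => // p hp.
  have hq : 0 <= 1 - p <= 1 by case/andP: hp => *; apply/andP; split; lra.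
  have := lam_ub _ _ _ hT hc x (1 - p) hq; lra.
rewrite lerBrDr; apply: lam_glb => // p hp.
have hq : 0 <= 1 - p <= 1 by case/andP: hp => *; apply/andP; split; lra.
have := lam_ub _ _ _ hT hc' (- x) (1 - p) hq; rewrite /=.
have -> : 1 - (1 - p) = p by ring.
lra.
Qed.

Lemma tail_ninf (R : realType) (T : R) (S : R -> R) : 0 < T -> concave_on01 S ->
  {within `[0, 1], continuous S} ->
  forall e, 0 < e -> exists X, forall x, x <= X ->
  - T * S 1 - e <= lam T S x - x <= - T * S 1.
Proof.
move=> hT hc hcont e e0.
have [X HX] := tail_pinf _ _ _ hT (concave_refl _ _ hc) (cont1 _ _ hcont) e e0.
exists (- X) => x xX; rewrite lam_refl //.
by have := HX (- x); rewrite subr0 lerNr => /(_ xX).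
Qed.

Lemma tail_pinf' (R : realType) (T : R) (S : R -> R) : 0 < T -> concave_on01 S ->
  {within `[0, 1], continuous S} ->
  forall e, 0 < e -> exists X, forall x, X <= x ->
  - T * S 0 - e <= lam T S x <= - T * S 0.
Proof. by move=> hT hc hcont; apply: tail_pinf => //; apply: cont0. Qed.

Lemma cvg_pinf (R : realType) (T : R) (S : R -> R) : 0 < T -> concave_on01 S ->
  {within `[0, 1], continuous S} -> lam T S x @[x --> +oo] --> - T * S 0.
Proof.
move=> hT hc hcont; apply/cvgrPdist_le => e e0.
have [X HX] := tail_pinf' _ _ _ hT hc hcont e e0.
exists X; split; first exact: num_real.
move=> x /ltW /HX /andP[h1 h2]; rewrite ler_norml; apply/andP; split; lra.
Qed.

Lemma cvg_ninf (R : realType) (T : R) (S : R -> R) : 0 < T -> concave_on01 S ->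
  {within `[0, 1], continuous S} -> (lam T S x - x) @[x --> -oo] --> - T * S 1.
Proof.
move=> hT hc hcont; apply/cvgrPdist_le => e e0.
have [X HX] := tail_ninf _ _ _ hT hc hcont e e0.
exists X; split; first exact: num_real.
move=> x /ltW /HX /andP[h1 h2]; rewrite ler_norml; apply/andP; split; lra.
Qed.

Lemma eps_le (R : realType) (a b : R) : (forall e, 0 < e -> a <= b + e) -> a <= b.
Proof. by move=> h; apply/ler_addgt0Pr. Qed.

Section M.
Variables (R : realType) (T : R) (S : R -> R).
Hypothesis hT : 0 < T.
Hypothesis hconc : concave_on01 S.
Hypothesis hcont : {within `[0, 1], continuous S}.

Let L := lam T S.
Let ub := lam_ub R T S hT hconc.
Let glb := lam_glb R T S.

Lemma part1 : (forall p, 0 <= p <= 1 -> S p = S (1 - p)) <->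
        (forall x, lam T S x - lam T S (- x) = x).
Proof.
split=> [hs x|h].
  suff : lam T S (- x) = lam T S x - x by move=> ->; ring.
  apply/le_anti/andP; split.
    rewrite lerBrDr; apply: glb => p hp.
    have hq : 0 <= 1 - p <= 1 by case/andP: hp => *; apply/andP; split; lra.
    have := ub (- x) (1 - p) hq; rewrite -hs //; lra.
  apply: glb => p hp.
  have hq : 0 <= 1 - p <= 1 by case/andP: hp => *; apply/andP; split; lra.
  have := ub x (1 - p) hq; rewrite -hs //; lra.
have half : forall p, 0 < p < 1 -> S (1 - p) <= S p.
  move=> p hp; have [x0 hx0] := lam_exact R T S hT hconc p hp.
  have hq : 0 <= 1 - p <= 1 by case/andP: hp => *; apply/andP; split; lra.
  have := ub (- x0) (1 - p) hq; have := h x0; rewrite hx0 => e1 e2.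
  have : T * S (1 - p) <= T * S p by lra.
  by rewrite ler_pM2l.
have h01 : S 0 = S 1.
  have : T * S 0 = T * S 1; last by move/mulfI; apply; rewrite gt_eqF.
  apply/le_anti/andP; split; apply: eps_le => e e0;
  have [X0 H0] := tail_pinf' R T S hT hconc hcont e e0;
  have [X1 H1] := tail_ninf R T S hT hconc hcont e e0;
  set x := maxr X0 (- X1);
  (have /H0 : X0 <= x by rewrite le_max lexx);
  (have /H1 : - x <= X1 by rewrite lerNl le_max lexx orbT);
  have := h x; lra.
move=> p /andP[p0 p1].
case: (eqVneq p 0) => [->|pn0]; first by rewrite subr0.
case: (eqVneq p 1) => [->|pn1]; first by rewrite subrr.
have hp : 0 < p < 1 by rewrite !lt_neqAle eq_sym pn0 pn1 p0 p1.
have hq : 0 < 1 - p < 1 by case/andP: hp => *; apply/andP; split; lra.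
apply/le_anti/andP; split; last exact: half.
by have := half _ hq; have -> : 1 - (1 - p) = p by ring.
Qed.


Lemma part2 : S 0 = 0 <->
        ((forall x, lam T S x <= 0) /\ lam T S x @[x --> +oo] --> 0).
Proof.
have hc := cvg_pinf R T S hT hconc hcont.
split=> [h0|[_ h]].
  split; last by move: hc; rewrite h0 mulr0.
  move=> x; have := ub x 0 (ltac:(by rewrite lexx ler01)); rewrite h0; lra.
have e : (0:R) = - T * S 0 by apply: cvg_unique h hc.
rewrite mulNr in e.
have : T * S 0 = 0 by lra.
by move/eqP; rewrite mulf_eq0 gt_eqF //= => /eqP.
Qed.

Lemma part3 : S 1 = 0 <->
        ((forall x, lam T S x <= x) /\ (lam T S x - x) @[x --> -oo] --> 0).
Proof.
have hc := cvg_ninf R T S hT hconc hcont.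
split=> [h0|[_ h]].
  split; last by move: hc; rewrite h0 mulr0.
  move=> x; have := ub x 1 (ltac:(by rewrite lexx ler01)); rewrite h0; lra.
have e : (0:R) = - T * S 1.
  apply: (@cvg_unique _ (@Rhausdorff R) _ _ _ _ h hc).
have : T * S 1 = 0 by lra.
by move/eqP; rewrite mulf_eq0 gt_eqF //= => /eqP.
Qed.


Lemma assoc_S01 : assoc_cond S -> S 0 = 0 /\ S 1 = 0.
Proof.
move=> ha.
have h2 : (0:R) < 2^-1 by rewrite invr_gt0.
have h21 : (2:R)^-1 < 1 by rewrite invf_lt1 // ltr1n.
have h0 := ha 0 (2^-1) (lexx 0) (ltW h2) (ltac:(rewrite add0r; exact: ltW)) ltr01
  (ltac:(by rewrite add0r)).
rewrite !add0r mul0r subr0 divr1 in h0.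
have e0 : S 0 = 0 by lra.
have h1 := ha (2^-1) 0 (ltW h2) (lexx 0) (ltac:(rewrite addr0; exact: ltW)) h21
  (ltac:(by rewrite addr0)).
rewrite !addr0 mul0r divff ?gt_eqF // e0 mulr0 addr0 in h1.
split => //; lra.
Qed.

Let O := oplusS T S.

Lemma O_ub x y p : 0 <= p <= 1 -> O x y <= p * x + (1 - p) * y - T * S p.
Proof.
move=> hp; rewrite /O oplus_lam //; have := ub (x - y) p hp; lra.
Qed.

Lemma O_glb x y c : (forall p, 0 <= p <= 1 -> c <= p * x + (1 - p) * y - T * S p) -> c <= O x y.
Proof.
move=> h; rewrite /O oplus_lam // -lerBlDr; apply: glb => p hp; have := h p hp; lra.
Qed.

Lemma alg (p r x y z Sp Sr Sq Ss q s : R) : q = p + (1 - p) * r -> q * s = p ->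
  Sp + (1 - p) * Sr = Sq + q * Ss ->
  q * (s * x + (1 - s) * y - T * Ss) + (1 - q) * z - T * Sq =
  p * x + (1 - p) * (r * y + (1 - r) * z - T * Sr) - T * Sp.
Proof.
move=> hq hs ha; apply/eqP; rewrite -subr_eq0; apply/eqP.
transitivity ((q * s - p) * (x - y) - T * ((Sq + q * Ss) - (Sp + (1 - p) * Sr))).
  rewrite hq; ring.
by rewrite hs ha !subrr mul0r mulr0 subrr.
Qed.

Lemma assoc_O : assoc_cond S -> forall x y z, O (O x y) z = O x (O y z).
Proof.
move=> ha x y z; have [S0 S1] := assoc_S01 ha.
have h01 : 0 <= (1:R) <= 1 by rewrite ler01 lexx.
have h00 : 0 <= (0:R) <= 1 by rewrite ler01 lexx.
apply/le_anti/andP; split.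
- apply: O_glb => p /andP[p0 p1].
  case: (eqVneq p 1) => [->|pn1].
    have := O_ub (O x y) z 1 h01; have := O_ub x y 1 h01; rewrite S1; lra.
  have p1' : p < 1 by rewrite lt_neqAle pn1.
  have hp : 0 < 1 - p by lra.
  suff key : (O (O x y) z - p * x + T * S p) / (1 - p) <= O y z.
    by move: key; rewrite ler_pdivrMr //; nra.
  apply: O_glb => r /andP[r0 r1]; rewrite ler_pdivrMr //.
  suff : O (O x y) z <= p * x + (1 - p) * (r * y + (1 - r) * z - T * S r) - T * S p by nra.
  case: (boolP ((p == 0) && (r == 0))) => [/andP[/eqP-> /eqP->]|hpr].
    have := O_ub (O x y) z 0 h00; rewrite S0; lra.
  set q := p + (1 - p) * r.
  have q0 : 0 < q.
    case/nandP: hpr => [pn0|rn0].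
      have : 0 < p by rewrite lt_neqAle eq_sym pn0.
      rewrite /q; nra.
    have : 0 < r by rewrite lt_neqAle eq_sym rn0.
    rewrite /q; nra.
  have q1 : q <= 1 by rewrite /q; nra.
  set s := p / q.
  have hs : q * s = p by rewrite /s mulrCA divff ?gt_eqF // mulr1.
  have s01 : 0 <= s <= 1.
    apply/andP; split; first by apply: divr_ge0 => //; exact: ltW.
    rewrite /s ler_pdivrMr // mul1r /q; nra.
  have hr : (1 - p) * r / (1 - p) = r by rewrite mulrC mulKf ?gt_eqF.
  have := ha p ((1 - p) * r) p0 (ltac:(nra)) q1 p1' q0; rewrite hr -/q -/s => hac.
  rewrite -(alg _ _ _ _ _ _ _ _ _ _ _ erefl hs hac).
  have := O_ub (O x y) z q (ltac:(by rewrite q1 ltW)).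
  have := O_ub x y s s01.
  have qq : 0 <= q by exact: ltW.
  move=> h1 h2; apply: (le_trans h2); rewrite lerD2r lerD2r.
  by apply: ler_wpM2l.
- apply: O_glb => q /andP[q0 q1].
  case: (eqVneq q 0) => [->|qn0].
    have := O_ub x (O y z) 0 h00; have := O_ub y z 0 h00; rewrite S0; lra.
  have q0' : 0 < q by rewrite lt_neqAle eq_sym qn0.
  suff key : (O x (O y z) - (1 - q) * z + T * S q) / q <= O x y.
    by move: key; rewrite ler_pdivrMr //; nra.
  apply: O_glb => s /andP[s0 s1]; rewrite ler_pdivrMr //.
  suff : O x (O y z) <= q * (s * x + (1 - s) * y - T * S s) + (1 - q) * z - T * S q by nra.
  case: (boolP ((q == 1) && (s == 1))) => [/andP[/eqP-> /eqP->]|hqs].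
    have := O_ub x (O y z) 1 h01; rewrite S1; lra.
  set p := q * s.
  have p0 : 0 <= p by rewrite /p mulr_ge0 // ltW.
  have p1 : p < 1.
    case/nandP: hqs => [qn1|sn1].
      have : q < 1 by rewrite lt_neqAle qn1.
      rewrite /p; nra.
    have : s < 1 by rewrite lt_neqAle sn1.
    rewrite /p; nra.
  have pq : p <= q by rewrite /p; nra.
  have hp : 0 < 1 - p by lra.
  set r := (q - p) / (1 - p).
  have r01 : 0 <= r <= 1.
    apply/andP; split; first by apply: divr_ge0; lra.
    rewrite /r ler_pdivrMr // mul1r; lra.
  have hq : q = p + (1 - p) * r by rewrite /r mulrC divfK ?gt_eqF //; ring.
  have hs : q * s = p by [].
  have := ha p (q - p) p0 (ltac:(lra)) (ltac:(lra)) p1 (ltac:(lra)).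
  have -> : p + (q - p) = q by ring.
  have -> : p / q = s by rewrite /p [q * s]mulrC mulfK ?gt_eqF.
  rewrite -/r => hac.
  rewrite (alg _ _ _ _ _ _ _ _ _ _ _ hq hs hac).
  have := O_ub x (O y z) p (ltac:(by rewrite p0 ltW)).
  have := O_ub y z r r01.
  move=> h1 h2; apply: (le_trans h2); rewrite lerD2r lerD2l.
  by apply: ler_wpM2l => //; exact: ltW.
Qed.

Definition ident := forall x y, lam T S (x - lam T S y) + lam T S y
                     = lam T S (lam T S (x - y) + y).

Lemma O_ident : (forall x y z, O (O x y) z = O x (O y z)) -> ident.
Proof.
move=> h x y; have := h x y 0.
by rewrite /O !oplus_lam // !subr0 !addr0.
Qed.

Lemma le2 (a b : R) : (forall e, 0 < e -> a <= b + 2 * e) -> a <= b.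
Proof.
move=> h; apply: eps_le => e e0; have := h (e / 2) (divr_gt0 e0 (ltr0Sn _ 1)).
by rewrite mulrC divfK.
Qed.

Lemma ident_S01 : ident -> S 0 = 0 /\ S 1 = 0.
Proof.
move=> hi.
have P0 := tail_pinf' R T S hT hconc hcont.
have N1 := tail_ninf R T S hT hconc hcont.
have mono := lam_mono R T S hT hconc.
have step1 : forall x, lam T S (x - (- T * S 0)) + (- T * S 0) = lam T S (x + (- T * S 1)).
  move=> x; apply/le_anti/andP; split; apply: le2 => e e0;
  have [X0 H0] := P0 e e0; have [X1 H1] := N1 e e0;
  set y := maxr X0 (x - X1);
  (have /H0 /andP[a1 a2] : X0 <= y by rewrite le_max lexx);
  (have /H1 /andP[b1 b2] : x - y <= X1 by rewrite lerBlDl -lerBlDr le_max lexx orbT);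
  have := hi x y => hxy;
  (have [m1 m2] : lam T S (x - (- T * S 0)) <= lam T S (x - lam T S y) /\ lam T S (x - lam T S y) <= lam T S (x - (- T * S 0)) + (x - lam T S y - (x - (- T * S 0)))
     by apply: mono; lra);
  (have [m3 m4] : lam T S (lam T S (x - y) + y) <= lam T S (x + (- T * S 1)) /\ lam T S (x + (- T * S 1)) <= lam T S (lam T S (x - y) + y) + (x + (- T * S 1) - (lam T S (x - y) + y))
     by apply: mono; lra);
  lra.
have c00 : (- T * S 0) = 0.
  apply/le_anti/andP; split; apply: le2 => e e0;
  have [X0 H0] := P0 e e0;
  set x := maxr (X0 + (- T * S 0)) (X0 - (- T * S 1));
  (have /H0 /andP[a1 a2] : X0 <= x - (- T * S 0) by rewrite lerBrDr le_max lexx);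
  (have /H0 /andP[b1 b2] : X0 <= x + (- T * S 1) by rewrite -lerBlDr le_max lexx orbT);
  have := step1 x; lra.
have c10 : (- T * S 1) = 0.
  apply/le_anti/andP; split; apply: le2 => e e0;
  have [X1 H1] := N1 e e0;
  set x := minr (X1 + (- T * S 0)) (X1 - (- T * S 1));
  (have /H1 /andP[a1 a2] : x - (- T * S 0) <= X1 by rewrite lerBlDr ge_min lexx);
  (have /H1 /andP[b1 b2] : x + (- T * S 1) <= X1 by rewrite -lerBrDr ge_min lexx orbT);
  have := step1 x; lra.
move: c00 c10; rewrite !mulNr => /eqP; rewrite oppr_eq0 mulf_eq0 gt_eqF //= => /eqP ->.
by move/eqP; rewrite oppr_eq0 mulf_eq0 gt_eqF //= => /eqP ->.
Qed.


Lemma algA (p r q s w y0 Sp Sr Sq Ss : R) : q = p + (1 - p) * r -> q * s = p ->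
  p * w - T * Sp + (r * y0 - T * Sr) <=
    q * (s * ((w + (r * y0 - T * Sr)) - y0) - T * Ss + y0) - T * Sq ->
  Sq + q * Ss <= Sp + (1 - p) * Sr.
Proof.
move=> hq hs H; rewrite -subr_ge0 -(pmulr_rge0 _ hT).
have E : q * (s * ((w + (r * y0 - T * Sr)) - y0) - T * Ss + y0) - T * Sq
   - (p * w - T * Sp + (r * y0 - T * Sr)) =
   T * ((Sp + (1 - p) * Sr) - (Sq + q * Ss)) + (q * s - p) * ((w + (r * y0 - T * Sr)) - y0).
  by rewrite hq; ring.
rewrite hs subrr mul0r addr0 in E.
by rewrite -E subr_ge0.
Qed.

Lemma algB (p r q s u0 y Sp Sr Sq Ss : R) : q = p + (1 - p) * r -> q * s = p ->
  q * ((s * u0 - T * Ss) + y) - T * Sq <= p * (u0 + y) + (1 - p) * (r * y - T * Sr) - T * Sp ->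
  Sp + (1 - p) * Sr <= Sq + q * Ss.
Proof.
move=> hq hs H; rewrite -subr_ge0 -(pmulr_rge0 _ hT).
have E : p * (u0 + y) + (1 - p) * (r * y - T * Sr) - T * Sp
   - (q * ((s * u0 - T * Ss) + y) - T * Sq) =
   T * ((Sq + q * Ss) - (Sp + (1 - p) * Sr)) + (p - q * s) * u0.
  by rewrite hq; ring.
rewrite hs subrr mul0r addr0 in E.
by rewrite -E subr_ge0.
Qed.

Lemma ident_assoc : ident -> assoc_cond S.
Proof.
move=> hi p1 p2 h1 h2 h12 hp1 hq0.
have [S0 S1] := ident_S01 hi.
case: (eqVneq p1 0) => [e|p1n0].
  by rewrite e subr0 divr1 !add0r mul0r S0 mulr0 mul1r add0r addr0.
case: (eqVneq p2 0) => [e|p2n0].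
  by rewrite e mul0r S0 mulr0 !addr0 divff // S1 mulr0 addr0.
have p1p : 0 < p1 by rewrite lt_neqAle eq_sym p1n0.
have p2p : 0 < p2 by rewrite lt_neqAle eq_sym p2n0.
case: (eqVneq (p1 + p2) 1) => [e|p12n1].
  have e2 : p2 / (1 - p1) = 1 by rewrite -e addrC addKr divff // gt_eqF.
  by rewrite e2 e S1 mulr0 addr0 divr1 mul1r add0r.
have p12 : p1 + p2 < 1 by rewrite lt_neqAle p12n1.
set p := p1; set q := p1 + p2; set r := p2 / (1 - p1); set s := p1 / q.
have hp : 0 < 1 - p by rewrite /p; lra.
have hpr : (1 - p) * r = p2 by rewrite /r mulrC divfK ?gt_eqF.
have hq : q = p + (1 - p) * r by rewrite hpr.
have hs : q * s = p by rewrite /s mulrCA divff ?gt_eqF // mulr1.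
have p01 : 0 < p < 1 by rewrite p1p; lra.
have q01 : 0 < q < 1 by apply/andP; split; rewrite /q; lra.
have r01 : 0 < r < 1.
  apply/andP; split; first by rewrite /r divr_gt0.
  by rewrite /r ltr_pdivrMr // mul1r; lra.
have s01 : 0 < s < 1.
  apply/andP; split; first by rewrite /s divr_gt0 // /q; lra.
  by rewrite /s ltr_pdivrMr /q; lra.
have w01 : forall t : R, 0 < t < 1 -> 0 <= t <= 1.
  by move=> t /andP[a b]; rewrite !ltW.
apply/le_anti/andP; split.
- have [u0 hu0] := lam_exact R T S hT hconc s s01.
  have [w0 hw0] := lam_exact R T S hT hconc q q01.
  have := hi (u0 + (w0 - lam T S u0)) (w0 - lam T S u0).
  have -> : u0 + (w0 - lam T S u0) - (w0 - lam T S u0) = u0 by ring.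
  have -> : lam T S u0 + (w0 - lam T S u0) = w0 by ring.
  rewrite hw0 => E.
  have b1 := ub (u0 + (w0 - lam T S u0) - lam T S (w0 - lam T S u0)) p (w01 _ p01).
  have b2 := ub (w0 - lam T S u0) r (w01 _ r01).
  have b3 : (1 - p) * lam T S (w0 - lam T S u0) <= (1 - p) * (r * (w0 - lam T S u0) - T * S r).
    by apply: ler_wpM2l => //; exact: ltW.
  apply: (algB p r q s u0 (w0 - lam T S u0)) => //.
  have -> : s * u0 - T * S s + (w0 - lam T S u0) = w0 by rewrite -hu0; ring.
  nra.
- have [y0 hy0] := lam_exact R T S hT hconc r r01.
  have [w hw] := lam_exact R T S hT hconc p p01.
  have := hi (w + lam T S y0) y0.
  have -> : w + lam T S y0 - lam T S y0 = w by ring.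
  rewrite hw => E.
  have b1 := ub (w + lam T S y0 - y0) s (w01 _ s01).
  have b2 := ub (lam T S (w + lam T S y0 - y0) + y0) q (w01 _ q01).
  have b3 : q * (lam T S (w + lam T S y0 - y0) + y0) <= q * (s * (w + lam T S y0 - y0) - T * S s + y0).
    by apply: ler_wpM2l; [case/andP: q01 => *; exact: ltW | lra].
  apply: (algA p r q s w y0) => //.
  rewrite -hy0; lra.
Qed.

End M.


Theorem proposition9p1 (R : realType) (T : R) (S : R -> R)
  (hT : 0 < T) (hcont : {within `[0, 1], continuous S})
  (hconc : concave_on01 S) :
  [/\ (forall p, 0 <= p <= 1 -> S p = S (1 - p)) <->
        (forall x, lam T S x - lam T S (- x) = x),
      S 0 = 0 <->
        ((forall x, lam T S x <= 0) /\ lam T S x @[x --> +oo] --> 0),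
      S 1 = 0 <->
        ((forall x, lam T S x <= x) /\ (lam T S x - x) @[x --> -oo] --> 0)
    & (assoc_cond S <->
        (forall x y, lam T S (x - lam T S y) + lam T S y
                     = lam T S (lam T S (x - y) + y))) /\
      (assoc_cond S ->
        forall x y z, oplusS T S (oplusS T S x y) z = oplusS T S x (oplusS T S y z))].
Proof.
split.
- exact: part1.
- exact: part2.
- exact: part3.
- split; last exact: assoc_O.
  split; first by move=> ha; apply: O_ident => //; exact: assoc_O.
  exact: ident_assoc.
Qed.
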